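(* Let $\mathfrak{P}$ be a nonempty compact set of probability distributions $P=(p_\omega)_{\omega\in\Omega}$ on $\Omega$ and $\Phi_R(\mathbf{x})=\min_{P\in\mathfrak{P}}\sum_{\omega\in\Omega}p_\omega Q_\omega(\mathbf{x})$. Let $\hat{\mathbf{x}}\in\mathcal{X}$ and for each $\omega\in\Omega$ let $\hat{\mathbf{S}}^\omega$ be an optimal solution of the problem defining $Q_\omega(\hat{\mathbf{x}})$; set $\hat y^\omega_{q,i}=1$ if $i\in\hat S^\omega_q$ and $\hat y^\omega_{q,i}=0$ otherwise. Then for every $\mathbf{x}\in\mathcal{X}$, $$\Phi_R(\mathbf{x})\;\ge\;\Phi_R(\hat{\mathbf{x}})-\sum_{q=1}^k\sum_{i\in N}\Big(\max_{P\in\mathfrak{P}}\sum_{\omega\in\Omega}p_\omega\,\rho^\omega_{q,i}(\boldsymbol{\emptyset})\,\hat y^\omega_{q,i}\,\xi^\omega_i\Big)x_{q,i}.$$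
   Context: Let $n,k$ be positive integers and $N=\{1,\dots,n\}$. $\mathbb{X}(N,k)$ denotes the set of $k$-tuples $\mathbf{S}=(S_1,\dots,S_k)$ of pairwise disjoint subsets of $N$; such a tuple is identified with $\mathbf{s}\in\{0,1\}^{kn}$ where $s_{q,i}=1$ iff $i\in S_q$. For $\mathbf{X},\mathbf{Y}\in\mathbb{X}(N,k)$ let $\mathbf{X}\sqcap\mathbf{Y}=(X_1\cap Y_1,\dots,X_k\cap Y_k)$ and $\mathbf{X}\sqcup\mathbf{Y}$ be the tuple whose $i$-th component is $(X_i\cup Y_i)\setminus\bigcup_{q\ne i}(X_q\cup Y_q)$. A function $f:\mathbb{X}(N,k)\to\mathbb{R}$ is $k$-submodular if $f(\mathbf{X})+f(\mathbf{Y})\ge f(\mathbf{X}\sqcap\mathbf{Y})+f(\mathbf{X}\sqcup\mathbf{Y})$ for all $\mathbf{X},\mathbf{Y}$, and monotone if $f(\mathbf{X})\le f(\mathbf{Y})$ whenever $X_q\subseteq Y_q$ for all $q$. $\boldsymbol{\emptyset}=(\emptyset,\dots,\emptyset)$. Given nonnegative integer budgets $A_1,\dots,A_k$ and $D_1,\dots,D_k$, the attacker's feasible set is $\mathcal{X}=\{\mathbf{x}\in\{0,1\}^{kn}:\sum_{i=1}^n x_{q,i}\le A_q\ \forall q,\ \sum_{q=1}^k x_{q,i}\le 1\ \forall i\in N\}$. Stochastic setting: $\Omega$ is a finite set of scenarios; for each $\omega\in\Omega$ we are given $\xi^\omega\in\{0,1\}^n$ and a monotone $k$-submodular function $f^\omega:\mathbb{X}(N,k)\to\mathbb{R}$,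 with marginal gains $\rho^\omega_{q,i}(\mathbf{X})=f^\omega(X_1,\dots,X_q\cup\{i\},\dots,X_k)-f^\omega(\mathbf{X})$ for $i\notin\bigcup_r X_r$. For $\mathbf{x}\in\mathcal{X}$, $Q_\omega(\mathbf{x})=\max\{f^\omega(\mathbf{S}):\mathbf{S}\in\mathbb{X}(N,k),\ s_{q,i}\le 1-x_{q,i}\xi^\omega_i\ \forall q,i,\ \sum_{i=1}^n s_{q,i}\le D_q\ \forall q\}$. *)

(* Defs.v *)
From HB Require Import structures.
From mathcomp Require Import all_boot all_order all_algebra.
From mathcomp Require Import all_classical all_reals all_analysis.
Set Implicit Arguments. Unset Strict Implicit. Unset Printing Implicit Defensive.
Import Order.TTheory GRing.Theory Num.Theory.
Local Open Scope ring_scope.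

Definition ktuple (n k : nat) := {ffun 'I_k -> {set 'I_n}}.

Definition pdisj n k (X : ktuple n k) : Prop :=
  forall q r : 'I_k, q != r -> (X q :&: X r == finset.set0).

Definition kmeet n k (X Y : ktuple n k) : ktuple n k :=
  [ffun q => X q :&: Y q].

Definition kjoin n k (X Y : ktuple n k) : ktuple n k :=
  [ffun q => (X q :|: Y q) :\: \bigcup_(r | r != q) (X r :|: Y r)].

Definition kempty n k : ktuple n k := [ffun => finset.set0].

Definition k_submodular (R : realType) n k (f : ktuple n k -> R) : Prop :=
  forall X Y, pdisj X -> pdisj Y ->
    f (kmeet X Y) + f (kjoin X Y) <= f X + f Y.

Definition k_monotone (R : realType) n k (f : ktuple n k -> R) : Prop :=
  forall X Y, pdisj X -> pdisj Y -> (forall q, X q \subset Y q) -> f X <= f Y.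

Definition rho (R : realType) n k (f : ktuple n k -> R) (X : ktuple n k)
  (q : 'I_k) (i : 'I_n) : R :=
  f [ffun r => if r == q then i |: X r else X r] - f X.

Definition attacker_feasible n k (A : 'I_k -> nat) (x : 'I_k -> 'I_n -> bool) : Prop :=
  (forall q, (\sum_(i < n) x q i <= A q)%N) /\
  (forall i, (\sum_(q < k) x q i <= 1)%N).

Definition defender_feasible n k (D : 'I_k -> nat) (xi : 'I_n -> bool)
  (x : 'I_k -> 'I_n -> bool) (S : ktuple n k) : bool :=
  [forall q, [forall q', (q != q') ==> (S q :&: S q' == finset.set0)]] &&
  [forall q, [forall i, (i \in S q) ==> ~~ (x q i && xi i)]] &&
  [forall q, (#|S q| <= D q)%N].

(* Q_omega(x): maximum of f over the defender feasible set (which always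
   contains the empty tuple, so the max starting from f(empty) is the max) *)
Definition Qval (R : realType) n k (D : 'I_k -> nat) (xi : 'I_n -> bool)
  (f : ktuple n k -> R) (x : 'I_k -> 'I_n -> bool) : R :=
  \big[Num.max/f (kempty n k)]_(S : ktuple n k | defender_feasible D xi x S) f S.

Definition is_distribution (R : realType) (Omega : finType) (P : Omega -> R) : Prop :=
  (forall w, 0 <= P w) /\ \sum_(w : Omega) P w = 1.

Local Open Scope classical_set_scope.

(* Phi_R(x) = min_{P in frakP} sum_w p_w Q_w(x)  (min realized as inf;
   it is attained since frakP is compact and nonempty) *)
Definition PhiR (R : realType) n k (Omega : finType) (frakP : set (Omega -> R))
  (D : 'I_k -> nat) (xi : Omega -> 'I_n -> bool) (f : Omega -> ktuple n k -> R)
  (x : 'I_k -> 'I_n -> bool) : R :=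
  inf [set (\sum_(w : Omega) P w * Qval D (xi w) (f w) x) | P in frakP].

(* Main.v *)
Require Import Defs.
From HB Require Import structures.
From mathcomp Require Import all_boot all_order all_algebra.
From mathcomp Require Import all_classical all_reals all_analysis.
From mathcomp Require Import lra.
Import numFieldNormedType.Exports.
Import Order.TTheory GRing.Theory Num.Theory.
Local Open Scope ring_scope.
Local Open Scope classical_set_scope.
Set Implicit Arguments. Unset Strict Implicit. Unset Printing Implicit Defensive.

Section Aux.
Variables (R : realType) (n k : nat).

Definition add1 (T : ktuple n k) (q : 'I_k) (i : 'I_n) : ktuple n k :=
  [ffun r => if r == q then i |: T r else T r].

Lemma dr (f : ktuple n k -> R) (T : ktuple n k) q i :
  k_submodular f -> pdisj T -> (forall r, i \notin T r) ->
  rho f T q i <= rho f (kempty n k) q i.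
Proof.
move=> hsub hT hi.
set X := add1 (kempty n k) q i.
have hX : pdisj X.
  move=> a b ab; rewrite /X /add1 /kempty !ffunE.
  apply/eqP/setP=> j; rewrite !inE.
  case: (a =P q) => [ea|na]; case: (b =P q) => [eb|nb]; rewrite ?inE ?andbF ?andFb //.
  by rewrite ea eb eqxx in ab.
have E1 : kmeet X T = kempty n k.
  apply/ffunP=> r; rewrite /kmeet /X /add1 /kempty !ffunE.
  apply/setP=> j; rewrite !inE.
  case: (r =P q) => [er|nr] /=; rewrite ?inE ?andFb //.
  by case: (j =P i) => [ji|//]; rewrite ji (negbTE (hi r)) ?andbF.
have hXs : forall s, X s = if s == q then i |: finset.set0 else finset.set0.
  by move=> s; rewrite /X /add1 /kempty !ffunE.
have E2 : kjoin X T = add1 T q i.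
  apply/ffunP=> r; rewrite /kjoin /add1 !ffunE; apply/setP=> j; rewrite !inE.
  have dj : forall s, s != r -> j \in T s -> j \in T r -> False.
    move=> s sr js jr; have := hT s r sr; move/eqP/setP/(_ j).
    by rewrite !inE js jr.
  have key : forall s, s != r -> j \in X s :|: T s ->
      j \in (if r == q then i |: T r else T r) -> False.
    move=> s sr; rewrite hXs.
    case: (s =P q) => [esq|nsq]; case: (r =P q) => [erq|nrq]; rewrite ?inE.
    - by rewrite esq erq eqxx in sr.
    - case/orP=> [/orP[/eqP ji|//]|js] jr; last exact: dj s sr js jr.
      by rewrite ji (negbTE (hi r)) in jr.
    - move=> js /orP[/eqP ji|jr]; last exact: dj s sr js jr.
      by rewrite ji (negbTE (hi s)) in js.
    - move=> js jr; exact: dj s sr js jr.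
  apply/idP/idP.
  - by move/andP=> [_]; case: (r == q); rewrite !inE ?orbF.
  - move=> h; apply/andP; split.
      by apply/bigcupP => -[s sr hs]; exact: key s sr hs h.
    by move: h; case: (r == q); rewrite !inE ?orbF.
have := hsub X T hX hT; rewrite E1 E2.
have -> : rho f (kempty n k) q i = f X - f (kempty n k) by [].
rewrite /rho -/(add1 T q i); lra.
Qed.

Lemma delta2 (V : nmodType) (F G : 'I_k -> 'I_n -> V) q0 i0 a :
  (forall q i, (q, i) != (q0, i0) -> F q i = G q i) -> F q0 i0 = G q0 i0 + a ->
  \sum_(q < k) \sum_(i < n) F q i = \sum_(q < k) \sum_(i < n) G q i + a.
Proof.
move=> hF h0; rewrite !pair_big /= (bigD1 (q0, i0)) //= [in RHS](bigD1 (q0, i0)) //=.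
rewrite h0 (eq_bigr (fun p => G p.1 p.2)); last by move=> [x y] /= h; apply: hF.
by rewrite addrAC.
Qed.

Lemma pdisj_sub (Y T : ktuple n k) : pdisj Y -> (forall q, T q \subset Y q) -> pdisj T.
Proof.
move=> hY hTY r s rs; rewrite -finset.subset0 -(eqP (hY r s rs)).
by apply: finset.setISS; apply: hTY.
Qed.

Lemma tele (f : ktuple n k -> R) (Y : ktuple n k) : k_submodular f -> pdisj Y ->
  forall T : ktuple n k, (forall q, T q \subset Y q) ->
  f Y - f T <= \sum_(q < k) \sum_(i < n)
     rho f (kempty n k) q i * ((i \in Y q) && (i \notin T q))%:R.
Proof.
move=> hsub hY.
pose meas (T : ktuple n k) : nat :=
  (\sum_(q < k) \sum_(i < n) (((i \in Y q) && (i \notin T q)) : nat))%R.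
pose G (T : ktuple n k) := f Y - f T <= \sum_(q < k) \sum_(i < n)
     rho f (kempty n k) q i * ((i \in Y q) && (i \notin T q))%:R.
have nonecase : forall T : ktuple n k, (forall q, T q \subset Y q) ->
    (forall p : 'I_k * 'I_n, ((p.2 \in Y p.1) && (p.2 \notin T p.1)) = false) -> G T.
  move=> T hTY none.
  have eTY : T = Y.
    apply/ffunP => r; apply/setP => j; apply/idP/idP => [/(fintype.subsetP (hTY r))//|jY].
    by have := none (r, j); rewrite /= jY /= => /negbFE.
  rewrite /G eTY subrr big1 // => r _; rewrite big1 // => j _.
  by rewrite andbN mulr0.
have step : forall (T : ktuple n k) q i, (forall q, T q \subset Y q) ->
    i \in Y q -> i \notin T q ->
    [/\ (meas (add1 T q i)).+1 = meas T, forall r, add1 T q i r \subset Y r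
      & G (add1 T q i) -> G T].
  move=> T q i hTY iY iT.
  have hrest : forall r j, (r, j) != (q, i) ->
      (j \in add1 T q i r) = (j \in T r).
    move=> r j hrj; rewrite /add1 ffunE; case: (r =P q) => [erq|//].
    rewrite finset.in_setU finset.in_set1; have : j != i by apply: contraNneq hrj => ->; rewrite erq.
    by move/negbTE => ->.
  have hqi : (i \in add1 T q i q) by rewrite /add1 ffunE eqxx finset.in_setU finset.in_set1 eqxx.
  split.
  - rewrite -addn1; symmetry; apply: (delta2 (q0:=q) (i0:=i)) => [r j hrj|]; first by rewrite (hrest _ _ hrj).
    by rewrite hqi iY iT.
  - move=> r; rewrite /add1 ffunE; case: (r =P q) => [->|_]; last exact: hTY.
    by rewrite finset.subUset finset.sub1set iY hTY.
  - rewrite /G => IH.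
    have hi : forall r, i \notin T r.
      move=> r; case: (r =P q) => [->//|nrq]; apply/negP => irT.
      have := hY r q (introN eqP nrq); move/eqP/setP/(_ i).
      by rewrite !inE (fintype.subsetP (hTY r) _ irT) iY.
    have hd := dr (i:=i) q hsub (pdisj_sub hY hTY) hi.
    have -> : \sum_(q0 < k) \sum_(i0 < n)
       rho f (kempty n k) q0 i0 * ((i0 \in Y q0) && (i0 \notin T q0))%:R =
       \sum_(q0 < k) \sum_(i0 < n)
       rho f (kempty n k) q0 i0 * ((i0 \in Y q0) && (i0 \notin add1 T q i q0))%:R
       + rho f (kempty n k) q i.
      apply: (delta2 (q0:=q) (i0:=i)) => [r j hrj|]; first by rewrite (hrest _ _ hrj).
      by rewrite hqi iY iT /= mulr1 mulr0 add0r.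
    move: hd IH; rewrite /rho; lra.
suff H : forall m (T : ktuple n k), (meas T <= m)%N -> (forall q, T q \subset Y q) -> G T.
  by move=> T; apply: (H (meas T)).
elim=> [|m IH] T hm hTY;
  case: (pickP (fun p : 'I_k * 'I_n => (p.2 \in Y p.1) && (p.2 \notin T p.1)))
    => [[q i] /= /andP[iY iT] | none]; try exact: nonecase.
- have [e _ _] := step T q i hTY iY iT.
  by move: hm; rewrite -e.
- have [e h1 h2] := step T q i hTY iY iT.
  apply: h2; apply: IH h1.
  by move: hm; rewrite -e.
Qed.

Lemma fe0 (D : 'I_k -> nat) (xi : 'I_n -> bool) (x : 'I_k -> 'I_n -> bool) :
  defender_feasible D xi x (kempty n k).
Proof.
rewrite /defender_feasible /kempty; apply/andP; split; [apply/andP; split|].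
- apply/forallP => q; apply/forallP => q'; rewrite !ffunE finset.set0I eqxx implybT //.
- apply/forallP => q; apply/forallP => i; rewrite !ffunE finset.in_set0 //.
- apply/forallP => q; rewrite !ffunE finset.cards0 //.
Qed.

Lemma scen (f : ktuple n k -> R) (xi : 'I_n -> bool) (D : 'I_k -> nat)
  (xhat x : 'I_k -> 'I_n -> bool) (Sh : ktuple n k) :
  k_submodular f -> defender_feasible D xi xhat Sh ->
  (forall S, defender_feasible D xi xhat S -> f S <= f Sh) ->
  Qval D xi f xhat - \sum_(q < k) \sum_(i < n)
     rho f (kempty n k) q i * (i \in Sh q)%:R * (xi i)%:R * (x q i)%:R
  <= Qval D xi f x.
Proof.
move=> hsub hfe hopt.
have Qle : Qval D xi f xhat <= f Sh.
  rewrite /Qval; elim/big_rec: _ => [|S r fS hr]; first exact: hopt _ (fe0 _ _ _).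
  by rewrite ge_max hr hopt.
pose S0 : ktuple n k := [ffun q => finset (fun j => (j \in Sh q) && ~~ (x q j && xi j))].
have S0sub : forall q, S0 q \subset Sh q.
  by move=> q; apply/fintype.subsetP => j; rewrite /S0 ffunE finset.in_set => /andP[].
move: hfe; rewrite /defender_feasible => /andP[/andP[hd hx] hc].
have hSh : pdisj Sh.
  by move=> q r qr; move/forallP: hd => /(_ q)/forallP/(_ r); rewrite qr.
have fS0 : defender_feasible D xi x S0.
  apply/andP; split; [apply/andP; split|].
  - apply/forallP => q; apply/forallP => q'; apply/implyP => qq'.
    by have := pdisj_sub hSh S0sub qq'.
  - apply/forallP => q; apply/forallP => i; apply/implyP.
    by rewrite /S0 ffunE finset.in_set => /andP[].
  - apply/forallP => q; apply: leq_trans (subset_leq_card (S0sub q)) _.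
    by move/forallP: hc => /(_ q).
have Qge : f S0 <= Qval D xi f x.
  by rewrite /Qval (bigD1 S0) //= le_max lexx.
have ht := tele hsub hSh S0sub.
have -> : \sum_(q < k) \sum_(i < n)
     rho f (kempty n k) q i * (i \in Sh q)%:R * (xi i)%:R * (x q i)%:R =
   \sum_(q < k) \sum_(i < n)
     rho f (kempty n k) q i * ((i \in Sh q) && (i \notin S0 q))%:R.
  apply: eq_bigr => q _; apply: eq_bigr => i _.
  rewrite /S0 ffunE finset.in_set.
  by case: (i \in Sh q); case: (x q i); case: (xi i); rewrite /= ?mulr1 ?mulr0.
move: ht Qle Qge; lra.
Qed.

Lemma dist_bound (Omega : finType) (P g : Omega -> R) : is_distribution P ->
  - (\sum_w `|g w|) <= \sum_w P w * g w /\ \sum_w P w * g w <= \sum_w `|g w|.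
Proof.
case=> hP h1.
have Ple1 : forall w, P w <= 1.
  by move=> w; rewrite -h1 (bigD1 w) //= lerDl sumr_ge0.
rewrite -sumrN; split; apply: ler_sum => w _;
  have := ler_norm (g w); have := ler_norm (- g w); rewrite normrN;
  have := hP w; have := Ple1 w; nra.
Qed.

End Aux.

Theorem theorem4 (R : realType) (n k : nat) (Omega : finType)
  (xi : Omega -> 'I_n -> bool) (f : Omega -> ktuple n k -> R)
  (A D : 'I_k -> nat) (frakP : set (Omega -> R))
  (hf : forall w, k_monotone (f w) /\ k_submodular (f w))
  (hP0 : frakP !=set0) (hPc : @compact {ptws Omega -> R} frakP)
  (hPd : forall P, frakP P -> is_distribution P)
  (xhat : 'I_k -> 'I_n -> bool) (hxhat : attacker_feasible A xhat)
  (Shat : Omega -> ktuple n k)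
  (hShat : forall w, defender_feasible D (xi w) xhat (Shat w) /\
     (forall S, defender_feasible D (xi w) xhat S -> f w S <= f w (Shat w)))
  (x : 'I_k -> 'I_n -> bool) (hx : attacker_feasible A x) :
  let yhat w q i := (i \in Shat w q) in
  PhiR frakP D xi f xhat
  - \sum_(q < k) \sum_(i < n)
      (sup [set (\sum_(w : Omega) P w * rho (f w) (kempty n k) q i
                   * (yhat w q i)%:R * (xi w i)%:R) | P in frakP]) * (x q i)%:R
  <= PhiR frakP D xi f x.
Proof.
cbv zeta.
have hfs : forall w, k_submodular (f w) by move=> w; case: (hf w).
pose c w := \sum_(q < k) \sum_(i < n) rho (f w) (kempty n k) q i
   * (i \in Shat w q)%:R * (xi w i)%:R * (x q i)%:R.
have hscen : forall w, Qval D (xi w) (f w) xhat - c w <= Qval D (xi w) (f w) x.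
  by move=> w; case: (hShat w) => h1 h2; apply: scen.
set Sup := fun q i => sup [set (\sum_(w : Omega) P w * rho (f w) (kempty n k) q i
                   * (i \in Shat w q)%:R * (xi w i)%:R) | P in frakP].
have hsupub : forall P, frakP P -> forall q i,
    \sum_(w : Omega) P w * rho (f w) (kempty n k) q i
                   * (i \in Shat w q)%:R * (xi w i)%:R <= Sup q i.
  move=> P hP q i; apply: sup_upper_bound; last by exists P.
  split; first by exists (\sum_(w : Omega) P w * rho (f w) (kempty n k) q i
                   * (i \in Shat w q)%:R * (xi w i)%:R), P.
  exists (\sum_w `|rho (f w) (kempty n k) q i * (i \in Shat w q)%:R * (xi w i)%:R|).
  move=> z [P' hP' <-].
  have [_ h] := dist_bound (fun w => rho (f w) (kempty n k) q i
                   * (i \in Shat w q)%:R * (xi w i)%:R) (hPd P' hP').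
  by move: h; under eq_bigr do rewrite !mulrA.
have hinf : forall P, frakP P ->
    PhiR frakP D xi f xhat <= \sum_(w : Omega) P w * Qval D (xi w) (f w) xhat.
  move=> P hP; rewrite /PhiR; apply: ge_inf; last by exists P.
  exists (- \sum_w `|Qval D (xi w) (f w) xhat|).
  move=> z [P' hP' <-].
  by have [h _] := dist_bound (fun w => Qval D (xi w) (f w) xhat) (hPd P' hP').
rewrite [X in _ <= X]/PhiR; apply: lb_le_inf.
  by case: hP0 => P hP; exists (\sum_(w : Omega) P w * Qval D (xi w) (f w) x), P.
move=> z [P hP <-].
have [hPnn _] := hPd P hP.
have key : \sum_w P w * Qval D (xi w) (f w) xhat - \sum_w P w * c w
    <= \sum_w P w * Qval D (xi w) (f w) x.
  rewrite -sumrB; apply: ler_sum => w _; rewrite -mulrBr.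
  by apply: ler_wpM2l; [exact: hPnn | exact: hscen].
have key2 : \sum_w P w * c w = \sum_(q < k) \sum_(i < n)
    (\sum_(w : Omega) P w * rho (f w) (kempty n k) q i
                   * (i \in Shat w q)%:R * (xi w i)%:R) * (x q i)%:R.
  rewrite /c; under eq_bigr do rewrite mulr_sumr; rewrite exchange_big /=.
  apply: eq_bigr => q _; under eq_bigr do rewrite mulr_sumr; rewrite exchange_big /=.
  apply: eq_bigr => i _; rewrite mulr_suml; apply: eq_bigr => w _.
  by rewrite !mulrA.
have key3 : \sum_(q < k) \sum_(i < n)
    (\sum_(w : Omega) P w * rho (f w) (kempty n k) q i
                   * (i \in Shat w q)%:R * (xi w i)%:R) * (x q i)%:R
    <= \sum_(q < k) \sum_(i < n) Sup q i * (x q i)%:R.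
  apply: ler_sum => q _; apply: ler_sum => i _.
  by apply: ler_wpM2r; [exact: ler0n | exact: hsupub].
have := hinf P hP; move: key key3; rewrite key2; lra.
Qed.
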